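(* A finite simple graph $G$ is a one-dimensional geometric graph if and only if $\Gamma^*(G)=0$.
   Context: A graph $G$ is a one-dimensional geometric graph if there is a map $\pi:V(G)\to\mathbb R$ such that for all distinct $u,v$, $u\sim v$ iff $|\pi(u)-\pi(v)|\le 1$. For a linear order $\prec$ on $V(G)$ and $v\in V(G)$ let $D(v)=\{x: x\prec v\}$, $U(v)=\{x: v\prec x\}$, and $N(v)$ the set of neighbours of $v$. Let $[x]_+=\max(x,0)$. For $A\subseteq V(G)$, $$\Gamma^*(G,\prec,A)=\frac{1}{|V(G)|^3}\sum_{u\prec v}\big[|N(v)\cap A\cap D(u)|-|N(u)\cap A\cap D(u)|\big]_+ +\frac{1}{|V(G)|^3}\sum_{u\prec v}\big[|N(u)\cap A\cap U(v)|-|N(v)\cap A\cap U(v)|\big]_+ ,$$ where the sums run over ordered pairs $(u,v)$ of vertices with $u\prec v$. Further $\Gamma^*(G,\prec)=\max_{A\subseteq V(G)}\Gamma^*(G,\prec,A)$ and $\Gamma^*(G)=\min_{\prec}\Gamma^*(G,\prec)$, the minimum over all linear orderings of $V(G)$. *)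

(* Defs.v *)
From HB Require Import structures.
From mathcomp Require Import all_boot all_order all_algebra all_fingroup.
From Stdlib Require Reals.
Set Implicit Arguments. Unset Strict Implicit. Unset Printing Implicit Defensive.
Import Order.TTheory GRing.Theory Num.Theory.

Definition simple_graph (T : finType) (e : rel T) : Prop :=
  symmetric e /\ irreflexive e.

Definition one_dim_geometric (T : finType) (e : rel T) : Prop :=
  exists pi : T -> Reals.Rdefinitions.R,
    forall u v : T, u <> v ->
      (e u v <-> Reals.Rdefinitions.Rle
                   (Reals.Rbasic_fun.Rabs (Reals.Rdefinitions.Rminus (pi u) (pi v)))
                   Reals.Rdefinitions.R1).

Local Open Scope ring_scope.

Definition posp (x : rat) : rat := Num.max 0 x.

Definition nbhd (T : finType) (e : rel T) (v : T) : {set T} := [set x | e v x].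

Definition GammaA (T : finType) (e : rel T) (lt : rel T) (A : {set T}) : rat :=
  let Dn := fun u => [set x | lt x u] in
  let Up := fun v => [set x | lt v x] in
  (#|T|%:R ^+ 3)^-1 *
    (\sum_(u : T) \sum_(v : T | lt u v)
        posp ((#|nbhd e v :&: A :&: Dn u|)%:R - (#|nbhd e u :&: A :&: Dn u|)%:R))
  + (#|T|%:R ^+ 3)^-1 *
    (\sum_(u : T) \sum_(v : T | lt u v)
        posp ((#|nbhd e u :&: A :&: Up v|)%:R - (#|nbhd e v :&: A :&: Up v|)%:R)).

(* Gamma*(G, <) = max over A of Gamma*(G,<,A) (all values are >= 0, so 0 is a
   harmless identity for the max). *)
Definition GammaOrd (T : finType) (e : rel T) (lt : rel T) : rat :=
  \big[Num.max/0]_(A : {set T}) GammaA e lt A.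

(* Linear orders on the finite set T are exactly the relations
   u < v  :=  rank (p u) < rank (p v)  for a permutation p of T. *)
Definition perm_order (T : finType) (p : {perm T}) : rel T :=
  fun u v => (enum_rank (p u) < enum_rank (p v))%N.

(* Gamma*(G) = min over all linear orders; the min is seeded with the value at
   the identity permutation (itself one of the minimised values). *)
Definition Gamma (T : finType) (e : rel T) : rat :=
  \big[Num.min/GammaOrd e (perm_order 1)]_(p : {perm T}) GammaOrd e (perm_order p).

(* Main.v *)
Require Import Defs.
From Stdlib Require Import Rdefinitions Raxioms RIneq Rbasic_fun Lra.
From mathcomp Require Import all_boot all_order all_algebra all_fingroup.
From mathcomp Require Import zify.
Import Order.TTheory GRing.Theory Num.Theory.
Set Implicit Arguments. Unset Strict Implicit. Unset Printing Implicit Defensive.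

Module CoreR.
Local Open Scope R_scope.

Definition good (A : nat -> nat -> bool) (n : nat) (y : nat -> R) :=
  forall i j, (i < j)%nat -> (j < n)%nat ->
    y i < y j /\ (A i j -> y j - y i < 1) /\ (~~ A i j -> y j - y i > 1).

Lemma good_mono A n y : good A n y -> forall i j, (i <= j)%nat -> (j < n)%nat -> y i <= y j.
Proof.
move=> g i j; rewrite leq_eqVlt => /orP[/eqP->|lij] jn; first lra.
by have [] := g i j lij jn; lra.
Qed.

Lemma core (A : nat -> nat -> bool) (n : nat) :
  (forall i j k, (i < j)%nat -> (j < k)%nat -> (k < n)%nat -> A i k -> A i j /\ A j k) ->
  exists y, good A n y.
Proof.
elim: n => [|n IH] umb.
  by exists (fun _ => 0); move=> i j _ /=.
have [y g] : exists y, good A n y.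
  apply: IH => i j k ij jk kn; apply: umb => //; lia.
set l := find (fun i => A i n) (iota 0 n).
have ln : (l <= n)%nat by rewrite -[X in (_ <= X)%nat](size_iota 0 n) find_size.
have bef : forall i, (i < l)%nat -> ~~ A i n.
  move=> i il; have := before_find 0%nat il; rewrite nth_iota ?add0n; last by lia.
  by move=> ->.
have atl : (l < n)%nat -> A l n.
  move=> lt; have := @nth_find _ 0%nat (fun i => A i n) (iota 0 n).
  rewrite nth_iota ?add0n // -/l; apply.
  by rewrite has_find size_iota.
have aft : forall i, (l <= i)%nat -> (i < n)%nat -> A i n.
  move=> i li ilt; move: li ilt; rewrite leq_eqVlt => /orP[/eqP<-|li] ilt.
    by apply: atl.
  by have [] := umb l i n li ilt (leqnn _) (atl ltac:(lia)).
have mono := @good_mono A n y g.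
have [c [c1 [c2 c3]]] : exists c, (forall i, (i < n)%nat -> y i < c) /\
     (forall i, (l <= i)%nat -> (i < n)%nat -> c - y i < 1) /\
     (forall i, (i < l)%nat -> c - y i > 1).
  have [ln'|ln'] := eqVneq l n.
    exists (y n.-1 + 2); split; [|split].
    - move=> i ilt; have := mono i n.-1 ltac:(lia) ltac:(lia); lra.
    - lia.
    - move=> i ilt; have := mono i n.-1 ltac:(lia) ltac:(lia); lra.
  have lln : (l < n)%nat by lia.
  have up : y n.-1 < y l + 1.
    have [e|ne] := eqVneq n.-1 l; first (rewrite e; lra).
    have [Al _] := umb l n.-1 n ltac:(lia) ltac:(lia) (leqnn _) (atl lln).
    by have [_ [h _]] := g l n.-1 ltac:(lia) ltac:(lia); have := h Al; lra.
  have [l0|l0] := eqVneq l 0%nat.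
    exists ((y n.-1 + y l + 1) / 2); split; [|split].
    - move=> i ilt; have := mono i n.-1 ltac:(lia) ltac:(lia); lra.
    - move=> i li ilt; have := mono l i li ilt; lra.
    - lia.
  have lo : y l.-1 < y l by have [] := g l.-1 l ltac:(lia) lln.
  exists ((Rmax (y n.-1) (y l.-1 + 1) + y l + 1) / 2).
  have m1 := Rmax_l (y n.-1) (y l.-1 + 1).
  have m2 := Rmax_r (y n.-1) (y l.-1 + 1).
  have m3 : Rmax (y n.-1) (y l.-1 + 1) < y l + 1.
    by apply: Rmax_lub_lt; lra.
  split; [|split].
  - move=> i ilt; have := mono i n.-1 ltac:(lia) ltac:(lia); lra.
  - move=> i li ilt; have := mono l i li ilt; lra.
  - move=> i il; have := mono i l.-1 ltac:(lia) ltac:(lia); lra.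
exists (fun i => if i == n then c else y i).
move=> i j ij jn.
have [jE|jne] := eqVneq j n.
  rewrite (_ : (i == n) = false); last by apply/eqP; lia.
  subst j; split; first by apply: c1.
  split.
  - move=> Ai; apply: c2 => //; rewrite leqNgt; apply/negP => il.
    by move: (bef i il); rewrite Ai.
  - move=> nA; apply: c3; rewrite ltnNge; apply/negP => li.
    by move: nA; rewrite aft.
rewrite (_ : (i == n) = false); last by apply/eqP; lia.
by apply: g => //; lia.
Qed.
End CoreR.

Module GammaFacts.
Local Open Scope ring_scope.
Section S.
Variables (T : finType) (e : rel T).

Definition umbrella (lt : rel T) : Prop :=
  forall x u v, lt x u -> lt u v -> e x v -> e x u /\ e u v.

Lemma posp_ge0 x : 0 <= posp x.
Proof. by rewrite /posp le_max lexx. Qed.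

Lemma posp_eq0 (a b : nat) : posp (a%:R - b%:R) = 0 <-> (a <= b)%N.
Proof.
rewrite /posp; split.
  move=> h; have : a%:R - b%:R <= 0 :> rat by rewrite -h le_max lexx orbT.
  by rewrite subr_le0 ler_nat.
by move=> ab; rewrite max_l // subr_le0 ler_nat.
Qed.

Lemma GammaA_ge0 lt A : 0 <= GammaA e lt A.
Proof.
rewrite /GammaA; apply: addr_ge0; apply: mulr_ge0; rewrite ?invr_ge0 ?exprn_ge0 ?ler0n //;
  by apply: sumr_ge0 => u _; apply: sumr_ge0 => v _; apply: posp_ge0.
Qed.

Lemma GammaOrd_ge0 lt : 0 <= GammaOrd e lt.
Proof.
rewrite /GammaOrd; apply: (big_ind (fun y => 0 <= y)) => //.
  by move=> x y hx hy; rewrite le_max hx.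
move=> A _; exact: GammaA_ge0.
Qed.

Lemma GammaA_umb lt : symmetric e -> umbrella lt -> forall A, GammaA e lt A = 0.
Proof.
move=> sym umb A; rewrite /GammaA.
rewrite !big1 ?mulr0 ?addr0 // => u _; rewrite big1 // => v uv; apply/posp_eq0;
  apply: subset_leq_card; apply/subsetP => x; rewrite !inE.
- case/andP=> /andP[eux xA] vx; rewrite xA vx andbT /=.
  by rewrite andbT; have [] := umb u v x uv vx eux.
- case/andP=> /andP[evx xA] xu; rewrite xA xu andbT /=.
  rewrite andbT sym; have [] := umb x u v xu uv; [by rewrite sym| move=> h _; exact: h].
Qed.

Lemma GammaA_umb_rev lt : symmetric e -> (0 < #|T|)%N ->
  (forall A, GammaA e lt A = 0) -> umbrella lt.
Proof.
move=> sym n0 h.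
have key : forall A, 
  (forall u v, lt u v -> (#|nbhd e v :&: A :&: [set x | lt x u]| <= #|nbhd e u :&: A :&: [set x | lt x u]|)%N) /\
  (forall u v, lt u v -> (#|nbhd e u :&: A :&: [set x | lt v x]| <= #|nbhd e v :&: A :&: [set x | lt v x]|)%N).
  move=> A; have := h A; rewrite /GammaA.
  have c0 : (#|T|%:R ^+ 3)^-1 != 0 :> rat by rewrite invr_eq0 expf_eq0 pnatr_eq0 /= -lt0n.
  have s0 : forall F : T -> T -> rat, (forall u v, 0 <= F u v) ->
      0 <= (#|T|%:R ^+ 3)^-1 * \sum_(u : T) \sum_(v : T | lt u v) F u v.
    move=> F hF; apply: mulr_ge0; rewrite ?invr_ge0 ?exprn_ge0 ?ler0n //.
    by apply: sumr_ge0 => u _; apply: sumr_ge0.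
  move=> /eqP; rewrite paddr_eq0 ?s0 // => [|u v|u v]; try exact: posp_ge0.
  rewrite !mulf_eq0 (negbTE c0) /= => /andP[/eqP h1 /eqP h2].
  split => u v uv; apply/posp_eq0.
  - have h3 := psumr_eq0P (fun w _ => sumr_ge0 _ (fun z _ => posp_ge0 _)) h1 (i := u) isT.
    exact: (psumr_eq0P (fun w _ => posp_ge0 _) h3).
  - have h3 := psumr_eq0P (fun w _ => sumr_ge0 _ (fun z _ => posp_ge0 _)) h2 (i := u) isT.
    exact: (psumr_eq0P (fun w _ => posp_ge0 _) h3).
move=> x u v xu uv exv; split.
- have [k _] := key [set x]; have := k u v uv.
  case: (set_0Vmem (nbhd e u :&: [set x] :&: [set x0 | lt x0 u])) => [E|[y]].
    rewrite E cards0 leqn0 => /eqP/cards0_eq/setP/(_ x).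
    by rewrite !inE eqxx xu andbT sym exv.
  by rewrite !inE => /andP[/andP[euy /eqP yx] _] _; rewrite sym -yx.
- have [_ k] := key [set v]; have := k x u xu.
  case: (set_0Vmem (nbhd e u :&: [set v] :&: [set x0 | lt u x0])) => [E|[y]].
    rewrite E cards0 leqn0 => /eqP/cards0_eq/setP/(_ v).
    by rewrite !inE eqxx uv andbT exv.
  by rewrite !inE => /andP[/andP[euy /eqP yx] _] _; rewrite -yx.
Qed.

Lemma GammaOrd_eq0 lt : GammaOrd e lt = 0 <-> forall A, GammaA e lt A = 0.
Proof.
split.
  move=> h A; apply/eqP; rewrite eq_le GammaA_ge0 andbT -h /GammaOrd (bigD1 A) //=.
  by rewrite le_max lexx.
move=> h; rewrite /GammaOrd; apply: (big_ind (fun y => y = 0)) => [//|x y -> ->|A _].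
  by rewrite maxxx.
by apply: h.
Qed.

Lemma Gamma_eq0 : Gamma e = 0 <-> exists p : {perm T}, GammaOrd e (perm_order p) = 0.
Proof.
split.
  move=> h; have : exists p : {perm T}, Gamma e = GammaOrd e (perm_order p).
    rewrite /Gamma; apply: (big_ind (fun y => exists p : {perm T}, y = GammaOrd e (perm_order p))).
    - by exists 1%g.
    - by move=> x y [p ->] [q ->]; rewrite minEle; case: ifP => _; [exists p|exists q].
    - by move=> p _; exists p.
  by case=> p hp; exists p; rewrite -hp.
case=> p hp; apply/eqP; rewrite eq_le; apply/andP; split.
  by rewrite -hp /Gamma (bigD1 p) //= ge_min lexx.
rewrite /Gamma; apply: (big_ind (fun y => 0 <= y)); first exact: GammaOrd_ge0.
  by move=> x y hx hy; rewrite le_min hx.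
by move=> q _; exact: GammaOrd_ge0.
Qed.
End S.
End GammaFacts.

Module SortR.
Local Open Scope R_scope.

Lemma sort_perm (T : finType) (f : T -> R) :
  exists p : {perm T}, forall u v, perm_order p u v -> f u <= f v.
Proof.
pose leb := fun x y : T => if Rle_dec (f x) (f y) then true else false.
have tot : total leb.
  move=> x y; rewrite /leb; case: Rle_dec => //= h; case: Rle_dec => //= h'; lra.
have tr : transitive leb.
  move=> x y z; rewrite /leb; case: Rle_dec => //= h1; case: Rle_dec => //= h2.
  by case: Rle_dec => //= h3; lra.
pose s := sort leb (enum T).
have ps : perm_eq s (enum T) by rewrite perm_sort.
have sz : size s = #|T| by rewrite (perm_size ps) cardE.
have mem : forall x, x \in s by move=> x; rewrite (perm_mem ps) mem_enum.
have ilt : forall x, (index x s < #|T|)%nat by move=> x; rewrite -sz index_mem.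
pose g := fun x => enum_val (Ordinal (ilt x)).
have ginj : injective g.
  move=> x y /enum_val_inj /(congr1 val) /= h.
  by rewrite -(nth_index x (mem x)) h nth_index.
exists (perm ginj) => u v; rewrite /perm_order !permE /g !enum_valK /= => uv.
have := sorted_ltn_nth tr u (sort_sorted tot (enum T)).
move=> /(_ (index u s) (index v s)); rewrite !inE !index_mem !mem => /(_ isT isT uv).
by rewrite !nth_index ?mem // /leb; case: Rle_dec.
Qed.

Lemma abs_le a b : a <= b -> (Rabs (a - b) <= 1 <-> b - a <= 1).
Proof. move=> h; unfold Rabs; destruct (Rcase_abs (a - b)); split; lra. Qed.
End SortR.


Theorem mainTheorem2 (T : finType) (e : rel T) :
  simple_graph e ->
  (one_dim_geometric e <-> Gamma e = 0%R).
Proof.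
case=> sym irr; split.
  case=> pi H; have [p hp] := SortR.sort_perm pi.
  apply/GammaFacts.Gamma_eq0; exists p; apply/GammaFacts.GammaOrd_eq0.
  apply: GammaFacts.GammaA_umb => // x u v xu uv exv.
  have neq : forall a b, perm_order p a b -> a <> b.
    by move=> a b; rewrite /perm_order => h ab; move: h; rewrite ab ltnn.
  have xv : perm_order p x v by rewrite /perm_order; move: xu uv; rewrite /perm_order; lia.
  have h1 := hp _ _ xu; have h2 := hp _ _ uv.
  have := (H x v (neq _ _ xv)).1 exv; rewrite SortR.abs_le; last lra.
  move=> hd; split.
  - apply/(H x u (neq _ _ xu)); rewrite SortR.abs_le; lra.
  - apply/(H u v (neq _ _ uv)); rewrite SortR.abs_le; lra.
move=> G0.
have [T0|Tpos] := posnP #|T|.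
  exists (fun _ => R0) => u; by move: (card0_eq T0 u); rewrite inE.
have [p hp] := (GammaFacts.Gamma_eq0 e).1 G0.
have umb := GammaFacts.GammaA_umb_rev sym Tpos ((GammaFacts.GammaOrd_eq0 e _).1 hp).
have [d _] : exists d : T, true by case/card_gt0P: Tpos => d _; exists d.
pose vtx := fun i : nat => (p^-1)%g (enum_val (insubd (enum_rank d) i)).
pose idx := fun u : T => (enum_rank (p u) : nat).
have vi : forall u, vtx (idx u) = u by move=> u; rewrite /vtx /idx valKd enum_rankK permK.
have iv : forall i, (i < #|T|)%N -> idx (vtx i) = i.
  by move=> i hi; rewrite /vtx /idx permKV enum_valK val_insubd hi.
have idxlt : forall u, (idx u < #|T|)%N by move=> u; exact: ltn_ord.
pose A := fun i j => e (vtx i) (vtx j).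
have [y g] : exists y, CoreR.good A #|T| y.
  apply: CoreR.core => i j k ij jk kn.
  apply: umb; rewrite /perm_order -/(idx _) -/(idx _) !iv //; lia.
exists (fun u => y (idx u)) => u v uv.
have key : forall u v, (idx u < idx v)%N ->
   (e u v <-> Rle (Rabs (Rminus (y (idx u)) (y (idx v)))) R1).
  move=> a b ab; have [h1 [h2 h3]] := g _ _ ab (idxlt b).
  rewrite SortR.abs_le; last lra.
  rewrite /A !vi in h2 h3; case E: (e a b).
    by split => // _; have := h2 E; lra.
  by split => // h; have := h3 (negbT E); lra.
have : idx u != idx v by apply/eqP => h; apply: uv; rewrite -(vi u) h vi.
rewrite neq_ltn => /orP[h|h]; first exact: key.
rewrite sym Rabs_minus_sym; exact: key.
Qed.
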